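(* Let $3\le k\le n-1$ and let $T$ be a tree attaining the maximum value of $M_2$ over $\mathcal{CT}_{n,k}$. Then $T$ contains no internal path of length greater than $1$.
   Context: A chemical tree is a tree with maximum degree at most $4$. A branching vertex is a vertex of degree greater than $2$. An internal path is a path $u_0\cdots u_r$ ($r\ge1$) whose end vertices $u_0,u_r$ are branching and whose internal vertices all have degree $2$; its length is $r$. A segment of a tree is a path of positive length neither of whose end vertices has degree $2$ and all of whose internal vertices have degree $2$. $\mathcal{CT}_{n,k}$ is the class of all $n$-vertex chemical trees with exactly $k$ segments. $M_2(G)=\sum_{uv\in E(G)}d_ud_v$, where $d_v$ is the degree of $v$. *)

(* Defs.v *)
From mathcomp Require Import all_boot.
Set Implicit Arguments. Unset Strict Implicit. Unset Printing Implicit Defensive.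

Section Graphs.
Variable n : nat.
Implicit Types (e : rel 'I_n) (x y : 'I_n) (p : seq 'I_n).

Definition deg e x : nat := #|[set y | e x y]|.

Definition edges e : {set 'I_n * 'I_n} :=
  [set uv : 'I_n * 'I_n | e uv.1 uv.2 && (uv.1 < uv.2)%N].

Definition is_tree e : Prop :=
  [/\ symmetric e, irreflexive e, (forall x y, connect e x y)
    & #|edges e| = n.-1].

Definition is_chemical_tree e : Prop :=
  is_tree e /\ forall x, deg e x <= 4.

(* a path x :: p of positive length size p (distinct vertices) *)
Definition is_gpath e x p : bool :=
  [&& p != [::], uniq (x :: p) & path e x p].

Definition inner_vertices x p : seq 'I_n := behead (belast x p).

Definition segment e x p : bool :=
  [&& is_gpath e x p, deg e x != 2, deg e (last x p) != 2
    & all (fun v => deg e v == 2) (inner_vertices x p)].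

Definition internal_path e x p : bool :=
  [&& is_gpath e x p, 2 < deg e x, 2 < deg e (last x p)
    & all (fun v => deg e v == 2) (inner_vertices x p)].

(* A segment is counted by its (unordered) pair of end
   vertices; in a tree the path between two vertices is unique, so this is
   exactly the number of segments.  Paths with distinct vertices have at most
   n vertices, hence are represented by tuples of length m <= n. *)
Definition seg_ends e : {set 'I_n * 'I_n} :=
  [set uv : 'I_n * 'I_n | (uv.1 < uv.2)%N &&
     [exists m : 'I_n.+1, exists t : (nat_of_ord m).-tuple 'I_n,
        segment e uv.1 t && (last uv.1 t == uv.2)]].

Definition num_segments e : nat := #|seg_ends e|.

Definition in_CT e k : Prop := is_chemical_tree e /\ num_segments e = k.

Definition M2 e : nat := \sum_(uv in edges e) deg e uv.1 * deg e uv.2.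

End Graphs.

(* Main.v *)
Require Import Defs.
From mathcomp Require Import all_boot zify.
From Stdlib Require Import FunctionalExtensionality.
Set Implicit Arguments. Unset Strict Implicit. Unset Printing Implicit Defensive.


Section L.
Variable n : nat.
Variable d : 'I_n.
Implicit Types (e : rel 'I_n) (s t : seq 'I_n).

Definition pth e s := path e (head d s) (behead s).
Definition consec s (u v : 'I_n) := (u, v) \in zip s (behead s).

Lemma consec_cat s1 u v s2 : consec (s1 ++ u :: v :: s2) u v.
Proof.
rewrite /consec; elim: s1 => [|a s1 IH] /=; first by rewrite inE eqxx.
case: s1 IH => [|b s1] IH /=; rewrite inE; apply/orP; right; exact: IH.
Qed.

Lemma consecP s u v : consec s u v -> exists s1 s2, s = s1 ++ u :: v :: s2.
Proof.
rewrite /consec; elim: s => [|a s IH] //=.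
case: s IH => [|b s] IH //=; rewrite inE => /orP[/eqP[-> ->]|/IH[s1 [s2 ->]]].
  by exists [::], s.
by exists (a :: s1), s2.
Qed.

Lemma consec_mem s u v : consec s u v -> (u \in s) && (v \in s).
Proof. by move/consecP=> [s1 [s2 ->]]; rewrite !mem_cat !inE !eqxx !orbT. Qed.

Lemma consec_rev s u v : consec (rev s) u v = consec s v u.
Proof.
apply/idP/idP.
  move/consecP=> [s1 [s2 E]]; have -> : s = rev s2 ++ v :: u :: rev s1.
    by rewrite -[s]revK E rev_cat !rev_cons -!cats1 -!catA.
  exact: consec_cat.
move/consecP=> [s1 [s2 ->]]; rewrite rev_cat !rev_cons -!cats1 -!catA /=.
exact: consec_cat.
Qed.

Lemma pth_consecP e s : pth e s <-> (forall u v, consec s u v -> e u v).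
Proof.
rewrite /pth /consec; case: s => [|a s] //=.
elim: s a => [|b s IH] a //=.
split=> [/andP[eab /IH H] u v|H].
  by rewrite inE => /orP[/eqP[-> ->] //|]; apply: H.
apply/andP; split; first by apply: H; rewrite inE eqxx.
by apply/IH => u v huv; apply: H; rewrite inE huv orbT.
Qed.

Lemma pth_rev e s : symmetric e -> pth e s -> pth e (rev s).
Proof.
move=> sym /pth_consecP H; apply/pth_consecP => u v; rewrite consec_rev.
by move/H; rewrite sym.
Qed.

Lemma head_rev s : head d (rev s) = last d s.
Proof. by case/lastP: s => [|s x] //=; rewrite rev_rcons last_rcons. Qed.

Lemma last_rev s : last d (rev s) = head d s.
Proof. by case: s => [|x s] //=; rewrite rev_cons last_rcons. Qed.

Lemma pth_catl e s1 s2 : pth e (s1 ++ s2) -> pth e s1.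
Proof.
move/pth_consecP=> H; apply/pth_consecP=> u v /consecP[t1 [t2 E]]; apply: H.
by rewrite E -catA; exact: consec_cat.
Qed.

Lemma pth_catr e s1 s2 : pth e (s1 ++ s2) -> pth e s2.
Proof.
move/pth_consecP=> H; apply/pth_consecP=> u v /consecP[t1 [t2 E]]; apply: H.
by rewrite E catA; exact: consec_cat.
Qed.

Lemma pth_cat e s1 a b s2 :
  pth e (rcons s1 a) -> e a b -> pth e (b :: s2) -> pth e (rcons s1 a ++ b :: s2).
Proof.
rewrite /pth; case: s1 => [|x s1] /=; first by move=> _ -> ->.
by rewrite cat_path rcons_path last_rcons => /andP[-> ->] /= -> ->.
Qed.

Lemma pth_sub e e' s : pth e s ->
  (forall u v, u \in s -> v \in s -> e u v -> e' u v) -> pth e' s.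
Proof.
move/pth_consecP=> H H'; apply/pth_consecP=> u v huv.
by case/andP: (consec_mem huv) => hu hv; apply: H' hu hv (H _ _ huv).
Qed.

Lemma interior_decomp s z : z \in s -> z != head d s -> z != last d s ->
  exists s1 u v s2, s = s1 ++ u :: z :: v :: s2.
Proof.
case/splitPr=> s1 s2.
case/lastP: s1 => [|s1 u]; first by rewrite /= eqxx.
case: s2 => [|v s2]; first by rewrite last_cat /= eqxx.
by move=> _ _; exists s1, u, v, s2; rewrite cat_rcons.
Qed.

Record segL e s : Prop := SegL {
  sg_size : 1 < size s; sg_uniq : uniq s; sg_pth : pth e s;
  sg_dh : deg e (head d s) != 2; sg_dl : deg e (last d s) != 2;
  sg_mid : forall z, z \in s -> deg e z != 2 -> z = head d s \/ z = last d s }.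

Lemma segL_rev e s : symmetric e -> segL e s -> segL e (rev s).
Proof.
move=> sym [h1 h2 h3 h4 h5 h6]; split.
- by rewrite size_rev.
- by rewrite rev_uniq.
- exact: pth_rev.
- by rewrite head_rev.
- by rewrite last_rev.
- by move=> z; rewrite mem_rev head_rev last_rev => /h6 H /H [] ->; auto.
Qed.

Lemma segment_segL e a t : segment e a t <-> segL e (a :: t).
Proof.
rewrite /segment /is_gpath /pth /inner_vertices /=.
case: t => [|b t]; first by split=> [/andP[/andP[]]|[]].
have Hl := lastI b t.
split.
  case/and4P=> /and3P[_ U P] da dl /allP A; split => //.
  move=> z; rewrite inE => /orP[/eqP->|zt dz]; first by auto.
  case: (eqVneq z (last b t)) => [->|nz]; first by auto.
  have : z \in belast b t by move: zt; rewrite Hl mem_rcons inE (negbTE nz).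
  by move/A/eqP => z2; rewrite z2 in dz.
case=> _ U P da dl A; apply/and4P; split => //; first by apply/and3P; split.
apply/allP => z zb; apply/negPn/negP => dz.
have zbt : z \in b :: t by rewrite Hl mem_rcons inE zb orbT.
case: (A z _ dz) => /= [|za|zl]; first by rewrite inE zbt orbT.
  by move: U; rewrite /= -za zbt.
have zb2 : z \in belast b t := zb.
have : uniq (b :: t) by case/andP: U.
by rewrite Hl rcons_uniq -zl zb2.
Qed.

End L.


Section C.
Variable n : nat.
Variable d : 'I_n.
Implicit Types (e : rel 'I_n) (s t L : seq 'I_n).

Fixpoint chok e L : Prop :=
  match L with
  | a :: ((b :: c :: _) as t) => (forall z, e b z -> z = a \/ z = c) /\ chok e t
  | _ => True
  end.

Lemma two_nb e b a c : deg e b = 2 -> e b a -> e b c -> a != c ->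
  forall z, e b z -> z = a \/ z = c.
Proof.
move=> D ba bc ac z bz.
case: (eqVneq z a) => [->|za]; first by left.
case: (eqVneq z c) => [->|zc]; first by right.
have : #|a |: (c |: [set z])| <= deg e b.
  apply: subset_leq_card; apply/subsetP => v; rewrite !inE.
  by case/or3P => /eqP ->.
rewrite D !cardsU1 cards1 !inE (negbTE ac) eq_sym (negbTE za) eq_sym (negbTE zc).
by [].
Qed.

Lemma chok_of e : symmetric e -> forall c p q, path e p (rcons c q) ->
  uniq (p :: rcons c q) -> all (fun z => deg e z == 2) c -> chok e (p :: rcons c q).
Proof.
move=> sym; elim=> [|b c IH] p q //= /andP[pb P] /andP[U1 U2] /andP[/eqP db D].
have H : chok e (p :: b :: rcons c q) <->
    (forall z, e b z -> z = p \/ z = head q c) /\ chok e (b :: rcons c q).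
  by case: c {IH P U1 U2 D}.
apply/H; split; last exact: IH.
apply: two_nb => //; first by rewrite sym.
  by case: c {IH U1 U2 D H} P => [|c0 c] /= /andP[].
have hin : head q c \in rcons c q by case: (c) => [|c0 c'] /=; rewrite ?inE eqxx ?orbT.
move: U1; rewrite inE negb_or => /andP[_ U1']; apply/eqP => E.
by rewrite E hin in U1'.
Qed.

Lemma chok_closed e L a : chok e (a :: L) ->
  forall z, z \in behead (belast a L) -> forall v, e z v -> v \in a :: L.
Proof.
elim: L a => [|b L IH] a //=.
case: L IH => [|c L] IH //= [H1 H2] z.
rewrite inE => /orP[/eqP-> v /H1 []->|zin v zv]; rewrite ?inE ?eqxx ?orbT //.
have := IH b H2 z zin v zv; rewrite !inE => /orP[->|->]; by rewrite ?orbT.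
Qed.

Lemma chok_prefix e L : forall a b w, chok e (a :: b :: L) ->
  uniq (a :: b :: w) -> path e b w ->
  (forall z, z \in belast b L -> z != last b w) -> exists r, w = L ++ r.
Proof.
elim: L => [|c L IH] a b w /=; first by move=> *; exists w.
move=> [H1 H2] U P N.
case: w U P N => [|z w] U P N; first by have := N b (mem_head _ _); rewrite eqxx.
move: P => /= /andP[bz P].
have zc : z = c.
  case: (H1 z bz) => // za; move: U; rewrite za /= !inE eqxx orbT.
  by case/andP.
subst z.
have [r ->] : exists r, w = L ++ r.
  apply: (IH b c w H2) => //; first by move: U => /= /andP[].
  by move=> z zin; apply: N; rewrite inE zin orbT.
by exists r.
Qed.

Lemma chok_avoid e s L : symmetric e -> uniq s -> pth d e s ->
  forall a b, chok e (a :: b :: L) ->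
  (forall z, z \in belast b L -> z \in s -> (z != head d s) && (z != last d s)) ->
  ~~ consec s a b -> ~~ consec s b a -> forall z, z \in belast b L -> z \notin s.
Proof.
move=> sym U P; elim: L => [|c L IH] a b //= [H1 H2] N nab nba.
have bs : b \notin s.
  apply/negP => bs; have /andP[bh bl] := N b (mem_head _ _) bs.
  have [s1 [u [v [s2 E]]]] := interior_decomp bs bh bl.
  have cub : consec s u b by rewrite E; apply: consec_cat.
  have cbv : consec s b v by rewrite E -cat_rcons; apply: consec_cat.
  move/pth_consecP: P => P.
  have ub := P _ _ cub; have bv := P _ _ cbv.
  have uv : u != v.
    apply/eqP => uv; move: U; rewrite E cat_uniq => /and3P[_ _].
    by rewrite /= !inE uv eqxx orbT.
  case: (H1 u); first by rewrite sym.
    by move=> ua; move: nab; rewrite -ua cub.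
  move=> uc; case: (H1 v bv) => [va|vc]; first by move: nba; rewrite -va cbv.
  by move: uv; rewrite uc vc eqxx.
move=> z; rewrite inE => /orP[/eqP->//|zin].
apply: (IH b c) => //.
- by move=> y yin; apply: N; rewrite inE yin orbT.
- by apply/negP => /consec_mem /andP[bs' _]; rewrite bs' in bs.
- by apply/negP => /consec_mem /andP[_ bs']; rewrite bs' in bs.
Qed.

End C.


Section S.
Variable n : nat.
Implicit Types (r : rel 'I_n).

Lemma deg_sum r z : deg r z = \sum_v (r z v : nat).
Proof.
rewrite /deg -sum1dep_card big_mkcond /=; apply: eq_bigr => v _.
by case: (r z v).
Qed.

Lemma sum_edges r (f : 'I_n -> 'I_n -> nat) : symmetric r -> irreflexive r ->
  (forall u v, f u v = f v u) ->
  2 * \sum_(uv in edges r) f uv.1 uv.2 = \sum_u \sum_v r u v * f u v.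
Proof.
move=> sym irr fs.
pose A u v := (r u v && (u < v)%N) * f u v.
have E1 : \sum_(uv in edges r) f uv.1 uv.2 = \sum_u \sum_v A u v.
  rewrite pair_bigA /= big_mkcond /=; apply: eq_bigr => [[u v]] _.
  by rewrite /edges inE /A /=; case: (_ && _); rewrite ?mul1n ?mul0n.
have E2 : \sum_u \sum_v r u v * f u v = \sum_u \sum_v A u v + \sum_u \sum_v A v u.
  rewrite -big_split /=; apply: eq_bigr => u _; rewrite -big_split /=.
  apply: eq_bigr => v _; rewrite /A (sym v u) (fs v u).
  case: (ltngtP u v) => h; rewrite ?andbT ?andbF ?mul0n ?addn0 //.
  by have uv : u = v := val_inj h; rewrite uv irr.
have E3 : \sum_u \sum_v A v u = \sum_u \sum_v A u v by rewrite exchange_big.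
by rewrite E2 E3 E1 mul2n -addnn.
Qed.

Lemma sum_mem (L : seq ('I_n * 'I_n)) (g : 'I_n -> 'I_n -> nat) : uniq L ->
  \sum_u \sum_v ((u, v) \in L) * g u v = \sum_(pr <- L) g pr.1 pr.2.
Proof.
move=> U; rewrite pair_bigA [RHS](big_uniq _ U) [RHS]big_mkcond /=; apply: eq_bigr => [[u v]] _ /=.
by case: ((u, v) \in L); rewrite ?mul1n ?mul0n.
Qed.

Lemma sum_pick (F : 'I_n -> nat) z : \sum_u (u == z) * F u = F z.
Proof.
rewrite (bigD1 z) //= eqxx mul1n big1 ?addn0 // => u /negbTE ->.
by rewrite mul0n.
Qed.

Lemma deg_sum2 r z : deg r z = \sum_u \sum_v r u v * (u == z).
Proof.
rewrite deg_sum -(sum_pick (fun u => \sum_v (r u v : nat)) z).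
apply: eq_bigr => u _; rewrite big_distrr /=; apply: eq_bigr => v _.
by rewrite mulnC.
Qed.

End S.


Section O.
Variable n : nat.
Variable d : 'I_n.
Implicit Types (e : rel 'I_n) (s c : seq 'I_n) (p q x y : 'I_n).

Definition LR p c q x y : seq ('I_n * 'I_n) :=
  [:: (p, head d c); (head d c, p); (last d c, q); (q, last d c); (x, y); (y, x)].
Definition LA p c q x y : seq ('I_n * 'I_n) :=
  [:: (p, q); (q, p); (x, head d c); (head d c, x); (last d c, y); (y, last d c)].
Definition op e p c q x y : rel 'I_n := fun u v =>
  (e u v && ((u, v) \notin LR p c q x y)) || ((u, v) \in LA p c q x y).

Record Hyp e p c q x y : Prop := MkHyp {
  h_sym : symmetric e; h_irr : irreflexive e; h_c : c != [::];
  h_path : path e p (rcons c q); h_uniq : uniq (p :: rcons c q);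
  h_deg2 : all (fun z => deg e z == 2) c;
  h_xy : e x y; h_x : x \notin c; h_y : y \notin c; h_pq : ~~ e p q;
  h_ne : ~~ ((x == p) && (y == q)) && ~~ ((x == q) && (y == p));
  h_ends : (deg e p != 2 /\ deg e q != 2) \/ (deg e x != 2 /\ deg e y != 2) }.

Section H.
Variables (e : rel 'I_n) (p : 'I_n) (c : seq 'I_n) (q x y : 'I_n).
Hypothesis H : Hyp e p c q x y.

Lemma H_pc : p \notin c.
Proof. by have := h_uniq H; rewrite /= mem_rcons inE negb_or => /andP[/andP[]]. Qed.
Lemma H_qc : q \notin c.
Proof. by have := h_uniq H; rewrite /= rcons_uniq => /andP[_ /andP[]]. Qed.
Lemma H_pq : p != q.
Proof. by have := h_uniq H; rewrite /= mem_rcons inE negb_or => /andP[/andP[]]. Qed.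
Lemma H_cuniq : uniq c.
Proof. by have := h_uniq H; rewrite /= rcons_uniq => /andP[_ /andP[]]. Qed.
Lemma H_c1 : head d c \in c.
Proof. by case: c (h_c H) => [|a c'] //= _; rewrite inE eqxx. Qed.
Lemma H_cm : last d c \in c.
Proof. by case: c (h_c H) => [|a c'] //= _; apply: mem_last. Qed.
Lemma H_xy : x != y.
Proof. by apply/eqP => E; have := h_xy H; rewrite E (h_irr H). Qed.
Lemma H_pc1 : e p (head d c).
Proof. by case: c (h_c H) (h_path H) => [|a c'] //= _ /andP[]. Qed.
Lemma H_cmq : e (last d c) q.
Proof.
have := h_path H; rewrite rcons_path => /andP[_].
by case: c (h_c H) => [|a c'].
Qed.
Lemma H_chok : chok e (p :: rcons c q).
Proof. exact: (chok_of (h_sym H) (h_path H) (h_uniq H) (h_deg2 H)). Qed.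
Lemma H_deg2 z : z \in c -> deg e z = 2.
Proof. by move=> zc; have /allP/(_ z zc)/eqP := h_deg2 H. Qed.

Lemma H_nb1 z : e (head d c) z -> z \notin c ->
  z = p \/ (z = q /\ head d c = last d c).
Proof.
have := H_chok; case: c (h_c H) => [|a c'] //= _.
case: c' => [|b c''] /= [H1 _] /H1 [] -> //; rewrite ?inE ?eqxx ?orbT //; by auto.
Qed.

Lemma H_closed z v : z \in c -> e z v -> v \in p :: rcons c q.
Proof.
move=> zc; apply: (chok_closed H_chok).
by rewrite belast_rcons.
Qed.

Lemma H_path_c : pth d e c.
Proof.
have := h_path H; rewrite rcons_path => /andP[P _].
by case: c (h_c H) P => [|a c'] //= _ /andP[].
Qed.

End H.

Lemma Hyp_rev e p c q x y : Hyp e p c q x y -> Hyp e q (rev c) p y x.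
Proof.
move=> H; have sym := h_sym H.
split => //.
- exact: h_irr H.
- by rewrite -size_eq0 size_rev size_eq0; exact: h_c H.
- have E : (fun z => e^~ z) =2 e by move=> u v; rewrite /= sym.
  have := h_path H; rewrite -(eq_path E) -rev_path last_rcons belast_rcons.
  by rewrite rev_cons.
- have E2 : q :: rcons (rev c) p = rev (p :: rcons c q) by rewrite rev_cons rev_rcons.
  by rewrite E2 rev_uniq; exact: h_uniq H.
- by rewrite all_rev; exact: h_deg2 H.
- by rewrite sym; exact: h_xy H.
- by rewrite mem_rev; exact: h_y H.
- by rewrite mem_rev; exact: h_x H.
- by rewrite sym; exact: h_pq H.
- by case/andP: (h_ne H) => A B; rewrite [(y == q) && _]andbC [(y == p) && _]andbC A B.
- by case: (h_ends H) => [[A B]|[A B]]; [left|right].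
Qed.

End O.


Lemma in6 (T : eqType) (w a1 a2 a3 a4 a5 a6 : T) :
  w \in [:: a1; a2; a3; a4; a5; a6] ->
  w = a1 \/ w = a2 \/ w = a3 \/ w = a4 \/ w = a5 \/ w = a6.
Proof.
rewrite !inE => /orP[/eqP->|/orP[/eqP->|/orP[/eqP->|/orP[/eqP->|/orP[/eqP->|/eqP->]]]]];
by auto 7.
Qed.

Section O2.
Variable n : nat.
Variable d : 'I_n.
Variables (e : rel 'I_n) (p : 'I_n) (c : seq 'I_n) (q x y : 'I_n).
Hypothesis H : Hyp e p c q x y.

Local Notation c1 := (head d c).
Local Notation cm := (last d c).
Local Notation e' := (op d e p c q x y).

Lemma LR_e u v : (u, v) \in LR d p c q x y -> e u v.
Proof.
have sym := h_sym H.
case/in6 => [[->->]|[[->->]|[[->->]|[[->->]|[[->->]|[->->]]]]]].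
- exact: H_pc1 H.
- by rewrite sym; exact: H_pc1 H.
- exact: H_cmq H.
- by rewrite sym; exact: H_cmq H.
- exact: h_xy H.
- by rewrite sym; exact: h_xy H.
Qed.

Lemma LA_e u v : (u, v) \in LA d p c q x y -> e u v -> (u, v) \in LR d p c q x y.
Proof.
have sym := h_sym H; have Hr := Hyp_rev H.
have nb1 z : e c1 z -> z \notin c -> (z = p) \/ (z = q /\ c1 = cm) := @H_nb1 n d _ _ _ _ _ _ H z.
have nbm z : e cm z -> z \notin c -> (z = q) \/ (z = p /\ cm = c1).
  move=> ez zc; have := @H_nb1 n d _ _ _ _ _ _ Hr z.
  by rewrite head_rev last_rev mem_rev; apply.
case/in6 => [[->->]|[[->->]|[[->->]|[[->->]|[[->->]|[->->]]]]]].
- by rewrite (negbTE (h_pq H)).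
- by rewrite sym (negbTE (h_pq H)).
- rewrite sym => /nb1 /(_ (h_x H)) [->|[-> ->]]; by rewrite !inE eqxx ?orbT.
- move=> /nb1 /(_ (h_x H)) [->|[-> ->]]; by rewrite !inE eqxx ?orbT.
- move=> /nbm /(_ (h_y H)) [->|[-> ->]]; by rewrite !inE eqxx ?orbT.
- rewrite sym => /nbm /(_ (h_y H)) [->|[-> ->]]; by rewrite !inE eqxx ?orbT.
Qed.

Lemma facts : [/\ p != q, p \notin c, q \notin c, x \notin c & y \notin c] /\
   [/\ x != y, c1 \in c & cm \in c].
Proof.
split; split; try exact: H_pq H; try exact: H_pc H; try exact: H_qc H;
  try exact: h_x H; try exact: h_y H; try exact: H_xy H; try exact: H_c1 H;
  exact: H_cm H.
Qed.

Lemma neqs : [/\ (c1 == p) = false, (c1 == q) = false, (c1 == x) = false & (c1 == y) = false]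
  /\ [/\ (cm == p) = false, (cm == q) = false, (cm == x) = false & (cm == y) = false]
  /\ [/\ (p == c1) = false, (q == c1) = false, (x == c1) = false & (y == c1) = false]
  /\ [/\ (p == cm) = false, (q == cm) = false, (x == cm) = false & (y == cm) = false]
  /\ [/\ (p == q) = false, (q == p) = false, (x == y) = false & (y == x) = false].
Proof.
have [[pq pc qc xc yc] [xy c1c cmc]] := facts.
have ne a b : a \in c -> b \notin c -> (a == b) = false.
  by move=> ac bc; apply/negbTE; apply: contraNneq bc => <-.
have ne' a b : a \in c -> b \notin c -> (b == a) = false.
  by move=> ac bc; rewrite eq_sym; apply: ne.
do !split; try (by apply: ne); try (by apply: ne'); try (by apply/negbTE);
  by apply/negbTE; rewrite eq_sym.
Qed.

Lemma uniq_LR : uniq (LR d p c q x y).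
Proof. rewrite /LR /= !inE !xpair_eqE; case: neqs => [[A1 A2 A3 A4] [[B1 B2 B3 B4] [[C1 C2 C3 C4] [[D1 D2 D3 D4] [E1 E2 E3 E4]]]]];
  rewrite ?A1 ?A2 ?A3 ?A4 ?B1 ?B2 ?B3 ?B4 ?C1 ?C2 ?C3 ?C4 ?D1 ?D2 ?D3 ?D4 ?E1 ?E2 ?E3 ?E4; by rewrite /= ?andbF. Qed.

Lemma uniq_LA : uniq (LA d p c q x y).
Proof. rewrite /LA /= !inE !xpair_eqE; case: neqs => [[A1 A2 A3 A4] [[B1 B2 B3 B4] [[C1 C2 C3 C4] [[D1 D2 D3 D4] [E1 E2 E3 E4]]]]];
  rewrite ?A1 ?A2 ?A3 ?A4 ?B1 ?B2 ?B3 ?B4 ?C1 ?C2 ?C3 ?C4 ?D1 ?D2 ?D3 ?D4 ?E1 ?E2 ?E3 ?E4; by rewrite /= ?andbF. Qed.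


Lemma opE u v : (e' u v : nat) + ((u, v) \in LR d p c q x y) =
  e u v + ((u, v) \in LA d p c q x y).
Proof.
rewrite /op.
case he: (e u v); case hR: ((u, v) \in LR d p c q x y);
  case hA: ((u, v) \in LA d p c q x y) => //=.
- by have := LA_e hA he; rewrite hR.
- by have := LR_e hR; rewrite he.
- by have := LR_e hR; rewrite he.
Qed.

Lemma sum_op (g : 'I_n -> 'I_n -> nat) :
  \sum_u \sum_v e' u v * g u v + \sum_(pr <- LR d p c q x y) g pr.1 pr.2 =
  \sum_u \sum_v e u v * g u v + \sum_(pr <- LA d p c q x y) g pr.1 pr.2.
Proof.
rewrite -(sum_mem _ uniq_LR) -(sum_mem _ uniq_LA) -!big_split /=.
apply: eq_bigr => u _; rewrite -!big_split /=; apply: eq_bigr => v _.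
by rewrite -!mulnDl opE.
Qed.

Lemma deg_op z : deg e' z = deg e z.
Proof.
have := sum_op (fun u v => (u == z : nat)).
rewrite -!deg_sum2 /LR /LA !big_cons big_nil /=.
lia.
Qed.

Lemma LR_swap u v : (u, v) \in LR d p c q x y -> (v, u) \in LR d p c q x y.
Proof.
by case/in6 => [[->->]|[[->->]|[[->->]|[[->->]|[[->->]|[->->]]]]]];
  rewrite !inE eqxx ?orbT.
Qed.

Lemma LA_swap u v : (u, v) \in LA d p c q x y -> (v, u) \in LA d p c q x y.
Proof.
by case/in6 => [[->->]|[[->->]|[[->->]|[[->->]|[[->->]|[->->]]]]]];
  rewrite !inE eqxx ?orbT.
Qed.

Lemma op_sym : symmetric e'.
Proof.
have sym := h_sym H.
have ER u v : ((u, v) \in LR d p c q x y) = ((v, u) \in LR d p c q x y).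
  by apply/idP/idP => /LR_swap.
have EA u v : ((u, v) \in LA d p c q x y) = ((v, u) \in LA d p c q x y).
  by apply/idP/idP => /LA_swap.
by move=> u v; rewrite /op sym ER EA.
Qed.

Lemma op_irr : irreflexive e'.
Proof.
have [[pq pc qc xc yc] [xy c1c cmc]] := facts.
move=> u; rewrite /op (h_irr H) /=; apply/negP.
case/in6 => [[E1 E2]|[[E1 E2]|[[E1 E2]|[[E1 E2]|[[E1 E2]|[E1 E2]]]]]].
- by move: pq; rewrite -E1 -E2 eqxx.
- by move: pq; rewrite -E1 -E2 eqxx.
- by move: xc; rewrite -E1 E2 c1c.
- by move: xc; rewrite -E2 E1 c1c.
- by move: yc; rewrite -E2 E1 cmc.
- by move: yc; rewrite -E1 E2 cmc.
Qed.

End O2.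


Section O3.
Variable n : nat.
Variable d : 'I_n.
Implicit Types (e : rel 'I_n) (s c : seq 'I_n) (p q x y : 'I_n).

Lemma mem_perm6 (T : eqType) (w : T) (L1 L2 : seq T) :
  {subset L1 <= L2} -> {subset L2 <= L1} -> (w \in L1) = (w \in L2).
Proof. by move=> A B; apply/idP/idP; [apply: A | apply: B]. Qed.

Lemma op_rev e p c q x y : op d e q (rev c) p y x =2 op d e p c q x y.
Proof.
move=> u v; rewrite /op /LR /LA head_rev last_rev.
congr (_ && ~~ _ || _); apply: mem_perm6 => w;
by case/in6 => [->|[->|[->|[->|[->|->]]]]]; rewrite !inE eqxx ?orbT.
Qed.

Lemma Hyp_op e p c q x y : Hyp e p c q x y -> Hyp (op d e p c q x y) x c y p q.
Proof.
move=> H.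
have [[pq pc qc xc yc] [xy c1c cmc]] := facts d H.
have nLRc u v : u \in c -> v \in c -> (u, v) \notin LR d p c q x y.
  move=> uc vc; apply/negP.
  case/in6 => [[E1 E2]|[[E1 E2]|[[E1 E2]|[[E1 E2]|[[E1 E2]|[E1 E2]]]]]];
  subst; by rewrite ?uc ?vc in pc qc xc yc.
split.
- exact: op_sym H.
- exact: op_irr H.
- exact: h_c H.
- have P := H_path_c d H.
  have [a [c' Ec]] : exists a c', c = a :: c' by case: (c) (h_c H) => [|a c'] // _; exists a, c'.
  have ha : head d c = a by rewrite Ec.
  have hl : last a c' = last d c by rewrite Ec.
  have -> : rcons c y = a :: rcons c' y by rewrite Ec.
  rewrite /= rcons_path hl; apply/and3P; split.
  + by rewrite /op /LA -ha !inE eqxx ?orbT.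
  + rewrite /pth Ec /= in P.
    apply: (sub_in_path (P := mem c)) P; last by rewrite -Ec; apply/allP.
    move=> u v uc vc euv; rewrite /op euv (nLRc u v uc vc) //.
  + by rewrite /op /LA !inE eqxx ?orbT.
- rewrite /= mem_rcons inE negb_or xy xc rcons_uniq yc /=; exact: H_cuniq H.
- apply/allP => z zc; rewrite (deg_op d H); by rewrite (H_deg2 H zc).
- by rewrite /op /LA mem_head orbT.
- exact: pc.
- exact: qc.
- rewrite /op.
  have hR : (x, y) \in LR d p c q x y by rewrite /LR !inE eqxx !orbT.
  rewrite hR /= andbF /=.
  apply/negP => /in6 H6.
  have pe (a b u v : 'I_n) : (a, b) = (u, v) -> a = u /\ b = v by case.
  case: H6 => [E|[E|[E|[E|[E|E]]]]]; case: (pe _ _ _ _ E) => E1 E2.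
  + by have := h_ne H; rewrite E1 E2 !eqxx.
  + by have := h_ne H; rewrite E1 E2 !eqxx /= andbF.
  + by move: yc; rewrite E2 c1c.
  + by move: xc; rewrite E1 c1c.
  + by move: xc; rewrite E1 cmc.
  + by move: xy; rewrite E1 E2 eqxx.
- case/andP: (h_ne H) => A B.
  rewrite (eq_sym p x) (eq_sym q y) (eq_sym p y) (eq_sym q x) A (andbC (y == p)) B.
  done.
- by rewrite !(deg_op d H); case: (h_ends H) => [[A B]|[A B]]; [right|left].
Qed.

Lemma op_op e p c q x y : Hyp e p c q x y ->
  op d (op d e p c q x y) x c y p q =2 e.
Proof.
move=> H u v.
have ER : ((u, v) \in LR d x c y p q) = ((u, v) \in LA d p c q x y).
  apply: mem_perm6 => w;
  by case/in6 => [->|[->|[->|[->|[->|->]]]]]; rewrite !inE eqxx ?orbT.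
have EA : ((u, v) \in LA d x c y p q) = ((u, v) \in LR d p c q x y).
  apply: mem_perm6 => w;
  by case/in6 => [->|[->|[->|[->|[->|->]]]]]; rewrite !inE eqxx ?orbT.
rewrite {1}/op ER EA /op.
case he: (e u v); case hR: ((u, v) \in LR d p c q x y);
  case hA: ((u, v) \in LA d p c q x y) => //=.
- by have := LA_e H hA he; rewrite hR.
- by have := LR_e H hR; rewrite he.
- by have := LR_e H hR; rewrite he.
Qed.

End O3.


Section G.
Variable n : nat.
Variable d : 'I_n.
Implicit Types (e : rel 'I_n) (s t c : seq 'I_n).

Lemma head_catc s1 z X : head d (s1 ++ z :: X) = head z s1.
Proof. by case: s1. Qed.

Lemma uniq_disj (A B : seq 'I_n) z : uniq (A ++ B) -> z \in A -> z \notin B.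
Proof.
rewrite cat_uniq => /and3P[_ /hasPn H _] zA; apply/negP => zB.
by have := H z zB; rewrite zA.
Qed.

Lemma uniq_disj' (A B : seq 'I_n) z : uniq (A ++ B) -> z \in B -> z \notin A.
Proof.
rewrite cat_uniq => /and3P[_ /hasPn H _] zB; exact: H.
Qed.

Lemma segL_eq e1 e2 s : e1 =2 e2 -> segL d e1 s -> segL d e2 s.
Proof.
move=> E [h1 h2 h3 h4 h5 h6].
have D z : deg e1 z = deg e2 z by rewrite !deg_sum; apply: eq_bigr => v _; rewrite E.
split => //; rewrite -?D //.
  by rewrite /pth -(eq_path E).
by move=> z; rewrite -D; apply: h6.
Qed.

End G.

Section Core.
Variable n : nat.
Variable d : 'I_n.
Variables (e : rel 'I_n) (p : 'I_n) (c : seq 'I_n) (q x y : 'I_n).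
Hypothesis H : Hyp e p c q x y.
Local Notation e' := (op d e p c q x y).
Local Notation c1 := (head d c).
Local Notation cm := (last d c).

Lemma noLR (t : seq 'I_n) u v : c1 \notin t -> cm \notin t -> ~~ ((x \in t) && (y \in t)) ->
  u \in t -> v \in t -> (u, v) \notin LR d p c q x y.
Proof.
move=> h1 hm hxy ut vt; apply/negP => /in6 H6.
have pe (a b u' v' : 'I_n) : (a, b) = (u', v') -> a = u' /\ b = v' by case.
case: H6 => [E|[E|[E|[E|[E|E]]]]]; case: (pe _ _ _ _ E) => E1 E2; subst.
- by rewrite vt in h1.
- by rewrite ut in h1.
- by rewrite ut in hm.
- by rewrite vt in hm.
- by rewrite ut vt in hxy.
- by rewrite ut vt in hxy.
Qed.

Lemma nLRc u v : u \in c -> v \in c -> (u, v) \notin LR d p c q x y.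
Proof.
have [[pq pc qc xc yc] [xy c1c cmc]] := facts d H.
move=> uc vc; apply/negP => /in6 H6.
have pe (a b u' v' : 'I_n) : (a, b) = (u', v') -> a = u' /\ b = v' by case.
case: H6 => [E|[E|[E|[E|[E|E]]]]]; case: (pe _ _ _ _ E) => E1 E2; subst.
- by rewrite uc in pc.
- by rewrite vc in pc.
- by rewrite vc in qc.
- by rewrite uc in qc.
- by rewrite uc in xc.
- by rewrite vc in xc.
Qed.

Lemma pth_op (t : seq 'I_n) : pth d e t -> (forall u v, u \in t -> v \in t -> (u, v) \notin LR d p c q x y) ->
  pth d e' t.
Proof.
move=> P N; apply: (pth_sub P) => u v ut vt euv.
by rewrite /op euv (N u v ut vt).
Qed.

Lemma inLA1 : e' p q. Proof. by rewrite /op /LA mem_head orbT. Qed.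
Lemma inLA3 : e' x c1. Proof. by rewrite /op /LA !inE eqxx !orbT. Qed.
Lemma inLA5 : e' cm y. Proof. by rewrite /op /LA !inE eqxx !orbT. Qed.

Lemma core (s : seq 'I_n) : segL d e s -> consec s p c1 ->
  exists s', [/\ segL d e' s', head d s' = head d s & last d s' = last d s].
Proof.
have [[pq pc qc xc yc] [xy c1c cmc]] := facts d H.
have [a [c' Ec]] : exists a c', c = a :: c' by case: (c) (h_c H) => [|a c'] // _; exists a, c'.
have ha : c1 = a by rewrite Ec.
move=> S; rewrite ha => /consecP [s1 [s2 Es]].
have U := sg_uniq S.
have [r Er] : exists r, s2 = rcons c' q ++ r.
  apply: (@chok_prefix _ e (rcons c' q) p a s2).
  - by have := H_chok H; rewrite Ec.
  - by move: U; rewrite Es cat_uniq => /and3P[].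
  - by have := sg_pth S; rewrite Es => /pth_catr; rewrite /pth /= => /andP[].
  - rewrite belast_rcons -Ec => z zc.
    have : last a s2 = last d s by rewrite Es last_cat.
    move=> ->; apply/eqP => E; have := sg_dl S; by rewrite -E (H_deg2 H zc).
have {Es Er s2} Es : s = s1 ++ p :: (c ++ q :: r) by rewrite Es Er Ec cat_rcons.
have {U} U : uniq s := sg_uniq S.
set s' := s1 ++ p :: q :: r.
have Hh : head d s' = head d s by rewrite Es !head_catc.
have Hl : last d s' = last d s by rewrite Es !last_cat /= last_cat.
have sub : subseq s' s.
  rewrite Es; apply: cat_subseq => //=; rewrite eqxx; exact: suffix_subseq.
have Us' : uniq s' := subseq_uniq sub U.
have Es1 : s = rcons s1 p ++ (c ++ q :: r) by rewrite Es cat_rcons.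
have Es2 : s = (s1 ++ p :: c) ++ q :: r by rewrite Es -catA.
have U1 := U; rewrite Es1 in U1.
have U2 := U; rewrite Es2 in U2.
have c1n1 : c1 \notin rcons s1 p by apply: (uniq_disj' U1); rewrite mem_cat c1c.
have cmn1 : cm \notin rcons s1 p by apply: (uniq_disj' U1); rewrite mem_cat cmc.
have c1n2 : c1 \notin q :: r by apply: (uniq_disj U2); rewrite mem_cat in_cons c1c !orbT.
have cmn2 : cm \notin q :: r by apply: (uniq_disj U2); rewrite mem_cat in_cons cmc !orbT.
have hd1 : head d s \in rcons s1 p by rewrite Es head_catc; case: (s1) => [|a0 s0] /=; rewrite ?inE eqxx.
have ld2 : last d s \in q :: r by rewrite Es !last_cat /= last_cat /=; exact: mem_last.
have hn2 : head d s \notin q :: r by apply: (uniq_disj U2); rewrite Es head_catc; case: (s1) => [|a0 s0]; rewrite /= ?mem_head.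

have ln1 : last d s \notin rcons s1 p by apply: (uniq_disj' U1); rewrite mem_cat ld2 orbT.
have xy1 : ~~ ((x \in rcons s1 p) && (y \in rcons s1 p)) /\ ~~ ((x \in q :: r) && (y \in q :: r)).
  case: (h_ends H) => [[dp dq]|[dx dy]].
    have s1n : s1 = [::].
      have := sg_mid S (_ : p \in s) dp; rewrite Es mem_cat inE eqxx orbT => /(_ isT).
      case=> [E|E].
        by case: (s1) E U1 => [//|a0 s0] /= ->; rewrite mem_cat mem_rcons mem_head.
      by move: ln1; rewrite Es -E mem_rcons mem_head.
    have rn : r = [::].
      have := sg_mid S (_ : q \in s) dq; rewrite Es mem_cat !inE mem_cat inE eqxx !orbT => /(_ isT).
      case=> [E|E]; first by move: hn2; rewrite Es -E inE eqxx.
      move: E; rewrite !last_cat /= last_cat /=.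
      case: (r) U2 => [//|a0 r0] U2 E.
      move: U2; rewrite cat_uniq => /and3P[_ _] /= /andP[].
      by rewrite E /= mem_last.
    rewrite s1n rn /= !inE; split; apply/negP => /andP[/eqP E1 /eqP E2];
      by move: xy; rewrite E1 E2 eqxx.
  have mid := sg_mid S.
  split; apply/negP => /andP[xt yt].
    have xs : x \in s by rewrite Es1 mem_cat xt.
    have ys : y \in s by rewrite Es1 mem_cat yt.
    case: (mid x xs dx) => Ex; case: (mid y ys dy) => Ey.
    - by move: xy; rewrite Ex Ey eqxx.
    - by move: ln1; rewrite -Ey yt.
    - by move: ln1; rewrite -Ex xt.
    - by move: xy; rewrite Ex Ey eqxx.
  have xs : x \in s by rewrite Es2 mem_cat xt orbT.
  have ys : y \in s by rewrite Es2 mem_cat yt orbT.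
  case: (mid x xs dx) => Ex; case: (mid y ys dy) => Ey.
  - by move: xy; rewrite Ex Ey eqxx.
  - by move: hn2; rewrite -Ex xt.
  - by move: hn2; rewrite -Ey yt.
  - by move: xy; rewrite Ex Ey eqxx.
case: xy1 => xy1 xy2.
exists s'; split; [|exact: Hh|exact: Hl].
split.
- by rewrite /s' size_cat /= !addnS.
- exact: Us'.
- rewrite /s' -cat_rcons; apply: pth_cat.
  + apply: pth_op; last by move=> u v; apply: noLR.
    by have := sg_pth S; rewrite Es1 => /pth_catl.
  + exact: inLA1.
  + apply: pth_op; last by move=> u v; apply: noLR.
    by have := sg_pth S; rewrite Es2 => /pth_catr.
- by rewrite Hh (deg_op d H); exact: sg_dh S.
- by rewrite Hl (deg_op d H); exact: sg_dl S.
- move=> z zs'; rewrite Hh Hl (deg_op d H); apply: (sg_mid S).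
  exact: (mem_subseq sub).
Qed.


Lemma core2 (s : seq 'I_n) : segL d e s -> consec s x y -> ~~ consec s p c1 -> ~~ consec s c1 p ->
  exists s', [/\ segL d e' s', head d s' = head d s & last d s' = last d s].
Proof.
have [[pq pc qc xc yc] [xy c1c cmc]] := facts d H.
have [a [c' Ec]] : exists a c', c = a :: c' by case: (c) (h_c H) => [|a c'] // _; exists a, c'.
have ha : c1 = a by rewrite Ec.
move=> S cxy; rewrite ha => npa nap.
have U := sg_uniq S.
have cns : forall z, z \in c -> z \notin s.
  move=> z; rewrite Ec -(belast_rcons a c' q) => zc.
  apply: (@chok_avoid _ d e s (rcons c' q) (h_sym H) U (sg_pth S) p a) => //.
  - by have := H_chok H; rewrite Ec.
  - rewrite belast_rcons -Ec => w wc ws; have dw := H_deg2 H wc.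
    apply/andP; split; apply/eqP => E.
      by have := sg_dh S; rewrite -E dw.
    by have := sg_dl S; rewrite -E dw.
case/consecP: cxy => s1 [s2 Es].
set s' := s1 ++ x :: (c ++ y :: s2).
have Hh : head d s' = head d s by rewrite Es !head_catc.
have Hl : last d s' = last d s by rewrite Es !last_cat /= last_cat.
have Es1 : s = rcons s1 x ++ y :: s2 by rewrite Es cat_rcons.
have Es' : s' = rcons s1 x ++ c ++ y :: s2 by rewrite /s' cat_rcons.
have U1 := U; rewrite Es1 in U1.
have yn1 : y \notin rcons s1 x by apply: (uniq_disj' U1); rewrite mem_head.
have xn2 : x \notin y :: s2 by apply: (uniq_disj U1); rewrite mem_rcons mem_head.
have c1n1 : c1 \notin rcons s1 x.
  by apply/negP => E; have := cns _ c1c; rewrite Es1 mem_cat E.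
have cmn1 : cm \notin rcons s1 x.
  by apply/negP => E; have := cns _ cmc; rewrite Es1 mem_cat E.
have c1n2 : c1 \notin y :: s2.
  by apply/negP => E; have := cns _ c1c; rewrite Es1 mem_cat E orbT.
have cmn2 : cm \notin y :: s2.
  by apply/negP => E; have := cns _ cmc; rewrite Es1 mem_cat E orbT.
have Us' : uniq s'.
  have P : perm_eq s' (c ++ s) by rewrite Es' Es1 perm_catCA.
  rewrite (perm_uniq P) cat_uniq U (H_cuniq H) /= andbT.
  by apply/hasPn => z zs; apply/negP => zc; have := cns _ zc; rewrite zs.
exists s'; split; [|exact: Hh|exact: Hl].
split.
- by rewrite /s' size_cat /= size_cat /= !addnS.
- exact: Us'.
- rewrite Es'.
  have -> : rcons s1 x ++ c ++ y :: s2 = rcons s1 x ++ a :: (c' ++ y :: s2) by rewrite Ec.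
  apply: pth_cat.
  + apply: pth_op => [|u v ut vt]; first by have := sg_pth S; rewrite Es1 => /pth_catl.
    by apply: (noLR (t := rcons s1 x)) => //; rewrite (negbTE yn1) andbF.
  + by rewrite -ha; exact: inLA3.
  + have -> : a :: (c' ++ y :: s2) = rcons (belast a c') (last a c') ++ y :: s2.
      by rewrite -lastI.
    apply: pth_cat.
    * rewrite -lastI -Ec; apply: pth_op => [|u v uc vc]; first exact: H_path_c H.
      exact: nLRc.
    * have -> : last a c' = cm by rewrite Ec.
      exact: inLA5.
    * apply: pth_op => [|u v ut vt]; first by have := sg_pth S; rewrite Es1 => /pth_catr.
      by apply: (noLR (t := y :: s2)) => //; rewrite (negbTE xn2).
- by rewrite Hh (deg_op d H); exact: sg_dh S.
- by rewrite Hl (deg_op d H); exact: sg_dl S.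
- move=> z; rewrite Hh Hl (deg_op d H) Es' !mem_cat orbCA => /orP[zc|zs].
    by rewrite (H_deg2 H zc).
  by apply: (sg_mid S); rewrite Es1 mem_cat.
Qed.

End Core.


Section SO.
Variable n : nat.
Variable d : 'I_n.

Lemma seg_op (e : rel 'I_n) p c q x y (s : seq 'I_n) : Hyp e p c q x y -> segL d e s ->
  exists s', [/\ segL d (op d e p c q x y) s', head d s' = head d s & last d s' = last d s].
Proof.
move=> H S.
have sym := h_sym H.
have sym' : symmetric (op d e p c q x y) := op_sym d H.
have Hr := Hyp_rev H.
have E : op d e q (rev c) p y x =2 op d e p c q x y := op_rev d e p c q x y.
have fromrev : forall s0 : seq 'I_n,
   (exists s', [/\ segL d (op d e p c q x y) s', head d s' = head d (rev s0) & last d s' = last d (rev s0)]) ->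
   exists s', [/\ segL d (op d e p c q x y) s', head d s' = head d s0 & last d s' = last d s0].
  move=> s0 [s' [S' h l]]; exists (rev s'); split; first exact: segL_rev.
    by rewrite head_rev l last_rev.
  by rewrite last_rev h head_rev.
have fromE : forall s0 : seq 'I_n,
   (exists s', [/\ segL d (op d e q (rev c) p y x) s', head d s' = head d s0 & last d s' = last d s0]) ->
   exists s', [/\ segL d (op d e p c q x y) s', head d s' = head d s0 & last d s' = last d s0].
  move=> s0 [s' [S' h l]]; exists s'; split => //; exact: segL_eq E S'.
have Sr := segL_rev sym S.
case: (boolP (consec s p (head d c))) => A1; first by have := core H S A1.
case: (boolP (consec s (head d c) p)) => A2.
  by apply: fromrev; apply: (core H Sr); rewrite consec_rev.
case: (boolP (consec s q (last d c))) => A3.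
  by apply: fromE; apply: (core Hr S); rewrite head_rev.
case: (boolP (consec s (last d c) q)) => A4.
  by apply: fromrev; apply: fromE; apply: (core Hr Sr); rewrite consec_rev head_rev.
case: (boolP (consec s x y)) => B1; first by have := core2 H S B1 A1 A2.
case: (boolP (consec s y x)) => B2.
  by apply: fromrev; apply: (core2 H Sr); rewrite consec_rev.
exists s; split => //.
case: S => h1 h2 h3 h4 h5 h6; split => //.
- move/pth_consecP: h3 => h3; apply/pth_consecP => u v cuv.
  rewrite /op (h3 _ _ cuv) /=; apply/orP; left.
  apply/negP => /in6 H6.
  have pe (a b u' v' : 'I_n) : (a, b) = (u', v') -> a = u' /\ b = v' by case.
  case: H6 => [E6|[E6|[E6|[E6|[E6|E6]]]]]; case: (pe _ _ _ _ E6) => E1 E2; subst.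
  + by rewrite cuv in A1.
  + by rewrite cuv in A2.
  + by rewrite cuv in A4.
  + by rewrite cuv in A3.
  + by rewrite cuv in B1.
  + by rewrite cuv in B2.
- by rewrite (deg_op d H).
- by rewrite (deg_op d H).
- by move=> z; rewrite (deg_op d H); apply: h6.
Qed.

Lemma seg_ends_sub (e : rel 'I_n) p c q x y : Hyp e p c q x y ->
  seg_ends e \subset seg_ends (op d e p c q x y).
Proof.
move=> H; apply/subsetP => [[a b]]; rewrite !inE /= => /andP[ab /existsP[m /existsP[t /andP[St /eqP Lt]]]].
rewrite ab /=.
have /segment_segL S := St.
have [s' [S' h l]] := seg_op H (S d).
case: s' S' h l => [|a' t'] S' //= h l.
  by case: S'.
subst a'.
have hsz : size t' < n.+1.
  have : size (a :: t') <= size (enum 'I_n).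
    by apply: (uniq_leq_size (sg_uniq S')) => z _; rewrite mem_enum.
  rewrite size_enum_ord /=; lia.
apply/existsP; exists (Ordinal hsz); apply/existsP; exists (in_tuple t').
rewrite /=; apply/andP; split.
  by apply/(segment_segL d).
by rewrite -Lt; apply/eqP.
Qed.

End SO.


Section T.
Variable n : nat.
Variable d : 'I_n.
Implicit Types (e r : rel 'I_n).

Lemma seg_ends_eq e1 e2 : e1 =2 e2 -> seg_ends e1 = seg_ends e2.
Proof.
move=> E; have -> // : e1 = e2.
by apply: functional_extensionality => u; apply: functional_extensionality => v; exact: E.
Qed.

Lemma nseg_op e p c q x y : Hyp e p c q x y ->
  num_segments (op d e p c q x y) = num_segments e.
Proof.
move=> H; rewrite /num_segments; apply/eqP; rewrite eqn_leq; apply/andP; split.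
  rewrite -(seg_ends_eq (op_op d H)).
  by apply: subset_leq_card; apply: seg_ends_sub; exact: Hyp_op.
by apply: subset_leq_card; apply: seg_ends_sub.
Qed.

Lemma edges2 r : symmetric r -> irreflexive r ->
  2 * #|edges r| = \sum_u \sum_v r u v * 1.
Proof.
move=> sym irr.
rewrite -(@sum_edges _ r (fun _ _ => 1) sym irr (fun _ _ => erefl)).
by rewrite sum1_card.
Qed.

Lemma M2_2 r : symmetric r -> irreflexive r ->
  2 * M2 r = \sum_u \sum_v r u v * (deg r u * deg r v).
Proof.
move=> sym irr; rewrite /M2.
by rewrite -(@sum_edges _ r (fun u v => deg r u * deg r v) sym irr (fun u v => mulnC _ _)).
Qed.

Lemma edges_op e p c q x y : Hyp e p c q x y ->
  #|edges (op d e p c q x y)| = #|edges e|.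
Proof.
move=> H.
have := sum_op d H (fun _ _ => 1).
rewrite -(edges2 (h_sym H) (h_irr H)) -(edges2 (op_sym d H) (op_irr d H)).
by rewrite /LR /LA !big_cons big_nil /=; lia.
Qed.

Lemma M2_op e p c q x y : Hyp e p c q x y ->
  2 * M2 (op d e p c q x y) +
  2 * (deg e p * deg e (head d c) + deg e (last d c) * deg e q + deg e x * deg e y) =
  2 * M2 e +
  2 * (deg e p * deg e q + deg e x * deg e (head d c) + deg e (last d c) * deg e y).
Proof.
move=> H.
have := sum_op d H (fun u v => deg e u * deg e v).
rewrite -(M2_2 (h_sym H) (h_irr H)).
have -> : \sum_u \sum_v op d e p c q x y u v * (deg e u * deg e v) =
          \sum_u \sum_v op d e p c q x y u v *
             (deg (op d e p c q x y) u * deg (op d e p c q x y) v).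
  by apply: eq_bigr => u _; apply: eq_bigr => v _; rewrite !(deg_op d H).
rewrite -(M2_2 (op_sym d H) (op_irr d H)).
rewrite /LR /LA !big_cons big_nil /= => E.
have S1 : forall a b : nat, a * b = b * a by move=> a b; rewrite mulnC.
lia.
Qed.

End T.


Section T2.
Variable n : nat.
Implicit Types (e r : rel 'I_n).

Lemma conn_edges r : symmetric r -> (forall u v, connect r u v) -> n.-1 <= #|edges r|.
Proof.
move=> sym C.
case: (posnP n) => [n0|n0]; first by apply: leq_trans (leq0n _); rewrite n0.
pose root := Ordinal n0.
pose P v k := [exists t : k.-tuple 'I_n, path r v t && (last v t == root)].
have exP v : exists k, P v k.
  case/connectP: (C v root) => t pt lt; exists (size t); apply/existsP.
  by exists (in_tuple t) => /=; rewrite pt -lt eqxx.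
pose dist v := ex_minn (exP v).
have distP v : P v (dist v) /\ forall k, P v k -> dist v <= k.
  by rewrite /dist; case: ex_minnP.
have step v : v != root -> exists w, r v w && (dist w < dist v).
  move=> vr; case: (distP v) => /existsP[t /andP[pt lt]] _.
  move: pt lt (size_tuple t); case: (tval t) => [|w s'] /=.
    by move=> _ /eqP E; rewrite E eqxx in vr.
  move=> /andP[rvw pw] lt sz; exists w; rewrite rvw /=.
  have : P w (size s') by apply/existsP; exists (in_tuple s'); rewrite /= pw lt.
  by move/(proj2 (distP w)); rewrite -sz ltnS.
pose f v := odflt v [pick w | r v w && (dist w < dist v)].
have fP v : v != root -> r v (f v) && (dist (f v) < dist v).
  move=> vr; rewrite /f; case: pickP => [w //|none].
  by case: (step v vr) => w; rewrite none.
pose g (v : 'I_n) := if (v < f v)%N then (v, f v) else (f v, v).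
have gE v : v != root -> g v \in edges r.
  move=> vr; case/andP: (fP v vr) => rv dv; rewrite /g /edges.
  case: (ltngtP v (f v)) => h; rewrite inE /=.
  - by rewrite rv h.
  - by rewrite sym rv h.
  - by have E : v = f v := val_inj h; rewrite -E ltnn in dv.
have ginj : {in [set~ root] &, injective g}.
  move=> u v; rewrite !inE => ur vr.
  case/andP: (fP u ur) => _ hu; case/andP: (fP v vr) => _ hv.
  rewrite /g; case: ifP => _; case: ifP => _ [E1 E2];
  first [done | (by move: hu hv; rewrite E2 -E1 => h1 h2; have := ltn_trans h1 h2; rewrite ltnn)
   | (by move: hu hv; rewrite E1 -E2 => h1 h2; have := ltn_trans h1 h2; rewrite ltnn)].
have : #|[set g v | v in [set~ root]]| <= #|edges r|.
  apply: subset_leq_card; apply/subsetP => _ /imsetP[v vin ->]; apply: gE.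
  by move: vin; rewrite in_setC1.
by rewrite card_in_imset // cardsC1 card_ord.
Qed.

Lemma uniq_nb r b a z : deg r b = 1 -> r b a -> r b z -> z = a.
Proof.
move=> D ba bz; apply/eqP; apply/negPn/negP => za.
have : #|[set a; z]| <= deg r b.
  by apply: subset_leq_card; apply/subsetP => v; rewrite !inE => /orP[]/eqP->.
by rewrite cards2 D eq_sym za.
Qed.


Lemma deg_pos e u v : connect e u v -> u != v -> 0 < deg e u.
Proof.
case/connectP => t pt lt; case: t pt lt => [|w t] /= pt lt; first by rewrite lt eqxx.
move=> _; apply/card_gt0P; exists w; rewrite inE; by case/andP: pt.
Qed.

Lemma sum_deg e : symmetric e -> irreflexive e -> \sum_u deg e u = 2 * #|edges e|.
Proof.
move=> sym irr; rewrite edges2 //; apply: eq_bigr => u _; rewrite deg_sum.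
by apply: eq_bigr => v _; rewrite muln1.
Qed.

Lemma leaf_exists e : symmetric e -> irreflexive e -> (forall u v, connect e u v) ->
  #|edges e| = n.-1 -> 1 < n -> exists l, deg e l = 1.
Proof.
move=> sym irr C E n1.
case: (pickP (fun l => deg e l == 1)) => [l /eqP Hl|none]; first by exists l.
exfalso.
have n0 : 0 < n by apply: ltnW.
have ge2 u : 2 <= deg e u.
  have [v vu] : exists v, v != u.
    case: (eqVneq u (Ordinal n0)) => [E0|ne]; last by exists (Ordinal n0); rewrite eq_sym.
    by exists (Ordinal n1); rewrite E0; apply/eqP => /(congr1 val).
  have := deg_pos (C u v) (_ : u != v); rewrite eq_sym => /(_ vu).
  by have := none u; case: (deg e u) => [|[|k]].
have : \sum_(u : 'I_n) 2 <= \sum_u deg e u by apply: leq_sum => u _; apply: ge2.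
by rewrite sum_deg // E sum_nat_const card_ord; lia.
Qed.

Lemma leaf_nb e l w z : symmetric e -> deg e l = 1 -> e l w -> deg e w = 1 ->
  connect e l z -> (z == l) || (z == w).
Proof.
move=> sym Dl lw Dw /connectP[t0 pt0 ->].
have claim : forall t a, (a == l) || (a == w) -> path e a t -> (last a t == l) || (last a t == w).
  elim=> [|b t IH] a //= ha /andP[ab pt]; apply: IH pt.
  case/orP: ha => /eqP E; subst a.
    by rewrite (uniq_nb Dl lw ab) eqxx orbT.
  by rewrite (uniq_nb Dw (_ : e w l) ab) ?eqxx // sym.
by apply: claim pt0; rewrite eqxx.
Qed.

End T2.


Section T3.
Variable n : nat.
Implicit Types (e r : rel 'I_n) (c : seq 'I_n).

Lemma path_rev_chain e p c q : symmetric e -> path e p (rcons c q) -> path e q (rcons (rev c) p).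
Proof.
move=> sym; have E : (fun z => e^~ z) =2 e by move=> u v; rewrite /= sym.
by rewrite -(eq_path E) -rev_path last_rcons belast_rcons rev_cons.
Qed.

Lemma no_pq e p c q : symmetric e -> irreflexive e -> (forall u v, connect e u v) ->
  #|edges e| = n.-1 -> c != [::] -> path e p (rcons c q) -> uniq (p :: rcons c q) -> ~~ e p q.
Proof.
move=> sym irr C E cne P U; apply/negP => epq.
case: c cne P U => [|a c'] // _ P U.
have pa : p != a.
  have pn : p \notin rcons (a :: c') q by case/andP: U.
  by move: pn; rewrite mem_rcons in_cons negb_or in_cons negb_or => /andP[_ /andP[]].
have pnc : p \notin q :: rev (a :: c').
  have pn : p \notin rcons (a :: c') q by case/andP: U.
  rewrite in_cons mem_rev negb_or.
  by move: pn; rewrite mem_rcons in_cons negb_or => /andP[-> ->].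
have qa : q != a.
  have U2 : uniq (rcons (a :: c') q) by case/andP: U.
  move: U2; rewrite rcons_uniq in_cons negb_or => /andP[/andP[]].
  by rewrite eq_sym.
pose L2 := [:: (p, a); (a, p)].
have UL : uniq L2 by rewrite /= inE xpair_eqE negb_and pa.
pose r u v := e u v && ((u, v) \notin L2).
have symr : symmetric r.
  move=> u v; rewrite /r sym /L2 !inE !xpair_eqE; congr (_ && _).
  by rewrite (andbC (v == p)) (andbC (v == a)) orbC.
have irrr : irreflexive r by move=> u; rewrite /r irr.
have Cr : forall u v, connect r u v.
  have cpa : connect r p a.
    apply: connect_trans (_ : connect r p q) _.
      by apply: connect1; rewrite /r epq /L2 !inE !xpair_eqE (negbTE qa) andbF /= (negbTE pa).
    have Pq := path_rev_chain sym P; rewrite rcons_path in Pq; case/andP: Pq => Pq _.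
    apply/connectP; exists (rev (a :: c')); last by rewrite rev_cons last_rcons.
    apply: (sub_in_path (P := mem (q :: rev (a :: c')))) Pq; last by apply/allP.
    move=> u v ui vi euv; rewrite /r euv /L2 !inE !xpair_eqE /=.
    apply/negP => /orP[/andP[/eqP E1 _]|/andP[_ /eqP E2]].
      by rewrite -E1 ui in pnc.
    by rewrite -E2 vi in pnc.
  move=> u v; apply: (connect_sub _ (C u v)) => {u v} u v euv.
  case: (boolP ((u, v) \in L2)) => h; last by apply: connect1; rewrite /r euv h.
  move: h; rewrite /L2 !inE !xpair_eqE => /orP[/andP[/eqP -> /eqP ->] //|/andP[/eqP -> /eqP ->]].
  by rewrite (sym_connect_sym symr).
have Er : 2 * #|edges r| + 2 = 2 * #|edges e|.
  rewrite !edges2 //.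
  rewrite (_ : 2 = \sum_u \sum_v ((u, v) \in L2) * 1); last first.
    by rewrite (sum_mem (fun _ _ => 1) UL) /L2 !big_cons big_nil.
  rewrite -big_split /=; apply: eq_bigr => u _; rewrite -big_split /=.
  apply: eq_bigr => v _; rewrite /r; case: (boolP ((u, v) \in L2)) => h /=.
    suff -> : e u v by [].
    move: h; rewrite /L2 !inE !xpair_eqE => /orP[/andP[/eqP -> /eqP ->]|/andP[/eqP -> /eqP ->]].
      by case/andP: P.
    by rewrite sym; case/andP: P.
  by rewrite andbT muln1 mul0n addn0.
have := conn_edges symr Cr.
lia.
Qed.

End T3.


Section T4.
Variable n : nat.
Variable d : 'I_n.

Lemma conn_op (e : rel 'I_n) p c q x y : Hyp e p c q x y -> (forall u v, connect e u v) ->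
  deg e y = 1 -> y != p -> y != q -> forall u v, connect (op d e p c q x y) u v.
Proof.
move=> H C Dy yp yq.
have sym := h_sym H.
have [[pq pc qc xc yc] [xy c1c cmc]] := facts d H.
have symC : connect_sym (op d e p c q x y) := sym_connect_sym (op_sym d H).
have nb_y w : e y w -> w = x.
  by move=> yw; apply: (uniq_nb Dy _ yw); rewrite sym; exact: h_xy H.
have walk : forall t z, path e z t -> uniq (z :: t) -> (last z t == p) || (last z t == q) ->
    z \notin c -> z != y -> connect (op d e p c q x y) z p || connect (op d e p c q x y) z q.
  elim=> [|z' t IH] z /=.
    by move=> _ _ /orP[/eqP->|/eqP->] _ _; rewrite connect0 ?orbT.
  move=> /andP[ez P] /andP[zn U] L zc zy.
  case: (eqVneq z p) => [->|zp]; first by rewrite connect0.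
  case: (eqVneq z q) => [->|zq]; first by rewrite connect0 orbT.
  have z'y : z' != y.
    apply/eqP => E; rewrite E in ez P U L zn.
    have zx : z = x by apply: nb_y; rewrite sym.
    case: t P U L zn {IH} => [|w t] /=.
      by move=> _ _ /orP[/eqP E1|/eqP E2]; [rewrite E1 eqxx in yp | rewrite E2 eqxx in yq].
    move=> /andP[yw _] _ _; rewrite (nb_y w yw) -zx !inE eqxx orbT.
    by [].
  have z'c : z' \notin c.
    apply/negP => z'c; have := H_closed H z'c (_ : e z' z); rewrite sym => /(_ ez).
    by rewrite inE mem_rcons inE (negbTE zp) (negbTE zq) (negbTE zc).
  have ez' : op d e p c q x y z z'.
    rewrite /op ez /=; apply/orP; left; apply/negP => /in6 H6.
    have pe (a b u' v' : 'I_n) : (a, b) = (u', v') -> a = u' /\ b = v' by case.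
    case: H6 => [E|[E|[E|[E|[E|E]]]]]; case: (pe _ _ _ _ E) => E1 E2.
    - by rewrite E1 eqxx in zp.
    - by rewrite E1 c1c in zc.
    - by rewrite E1 cmc in zc.
    - by rewrite E1 eqxx in zq.
    - by rewrite E2 eqxx in z'y.
    - by rewrite E1 eqxx in zy.
  case/orP: (IH z' P U L z'c z'y) => h.
    by rewrite (connect_trans (connect1 ez') h).
  by rewrite (connect_trans (connect1 ez') h) orbT.
have cx : connect (op d e p c q x y) x p || connect (op d e p c q x y) x q.
  case/connectP: (C x p) => t0 pt0 Ep.
  case: (shortenP pt0) Ep => t1 pt1 ut1 _ Ep.
  apply: walk pt1 ut1 _ xc xy; by rewrite -Ep eqxx.
have cpq : connect (op d e p c q x y) p q by apply: connect1; exact: inLA1.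
have cpx : connect (op d e p c q x y) p x.
  case/orP: cx => h; first by rewrite symC.
  by apply: connect_trans cpq _; rewrite symC.
have cpc1 : connect (op d e p c q x y) p (head d c).
  by apply: connect_trans cpx (connect1 _); exact: inLA3.
have cpcm : connect (op d e p c q x y) p (last d c).
  apply: connect_trans cpc1 _; apply/connectP; exists (behead c).
    have := pth_op (H_path_c d H) (nLRc d H); by [].
  by case: (c) (h_c H) => [|a c'].
have cpy : connect (op d e p c q x y) p y.
  by apply: connect_trans cpcm (connect1 _); exact: inLA5.
have hub w : w \in [:: p; q; x; head d c; last d c; y] -> connect (op d e p c q x y) p w.
  by rewrite !inE => /orP[/eqP->|/orP[/eqP->|/orP[/eqP->|/orP[/eqP->|/orP[/eqP->|/eqP->]]]]];
    rewrite ?connect0.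
have all z : connect (op d e p c q x y) p z.
  apply: (connect_sub _ (C p z)) => u v euv.
  case: (boolP ((u, v) \in LR d p c q x y)) => h; last first.
    by apply: connect1; rewrite /op euv h.
  have [hu hv] : u \in [:: p; q; x; head d c; last d c; y] /\ v \in [:: p; q; x; head d c; last d c; y].
    have pe (a b u' v' : 'I_n) : (a, b) = (u', v') -> a = u' /\ b = v' by case.
    case/in6: h => [E|[E|[E|[E|[E|E]]]]]; case: (pe _ _ _ _ E) => -> ->;
      by rewrite !inE !eqxx ?orbT.
  by apply: connect_trans (hub v hv); rewrite symC; apply: hub.
by move=> u v; apply: connect_trans (all v); rewrite symC.
Qed.

End T4.


Unset Implicit Arguments. Set Strict Implicit.
Theorem lemma3 (n k : nat) (e : rel 'I_n) :
  3 <= k -> k <= n - 1 ->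
  in_CT e k ->
  (forall e' : rel 'I_n, in_CT e' k -> M2 e' <= M2 e) ->
  forall (x : 'I_n) (p : seq 'I_n), internal_path e x p -> size p <= 1.
Proof.
move=> k3 kn [[[sym irr C E] D4] Nk] Max x p IP.
rewrite leqNgt; apply/negP => sz.
case/and4P: IP => /and3P[pne U P] dx dq A.
have Ep : p = rcons (inner_vertices x p) (last x p).
  rewrite /inner_vertices; move: pne; case: (p) => [|y0 p'] //= _.
  exact: lastI.
move: (inner_vertices x p) (last x p) Ep dq A => c q Ep dq A.
rewrite Ep in U P sz.
have cne : c != [::] by move: sz; rewrite size_rcons; case: (c).
have xq : x != q.
  by apply/eqP => E0; move: U; rewrite /= mem_rcons inE E0 eqxx.
have n1 : 1 < n.
  have := ltn_ord x; have := ltn_ord q.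
  have : val x != val q by [].
  lia.
have [l Dl] := leaf_exists sym irr C E n1.
have [w lw] : exists w, e l w.
  have : 0 < deg e l by rewrite Dl.
  by case/card_gt0P => w; rewrite inE => lw; exists w.
have D2 z : z \in c -> deg e z = 2.
  by move=> zc; move/allP: A => /(_ z zc) /eqP.
have lx : l != x by apply/eqP => E0; move: dx; rewrite -E0 Dl.
have lq : l != q by apply/eqP => E0; move: dq; rewrite -E0 Dl.
have lc : l \notin c by apply/negP => /D2; rewrite Dl.
have dw : 2 <= deg e w.
  have w1 : 0 < deg e w.
    by apply/card_gt0P; exists l; rewrite inE sym.
  case: (eqVneq (deg e w) 1) => Dw; last by lia.
  have := leaf_nb sym Dl lw Dw (C l x); rewrite eq_sym (negbTE lx) /= => /eqP E0.
  by move: dx; rewrite E0 Dw.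
have CH := chok_of sym P U A.
have wc : w \notin c.
  apply/negP => wc.
  have := chok_closed CH (_ : w \in behead (belast x (rcons c q))) (_ : e w l).
  rewrite belast_rcons sym => /(_ wc lw).
  by rewrite inE mem_rcons inE (negbTE lx) (negbTE lq) (negbTE lc).
have nxq := no_pq sym irr C E cne P U.
have H : Hyp e x c q w l.
  split => //.
  - by rewrite sym.
  - by rewrite (negbTE lq) (negbTE lx) !andbF.
  - by left; split; apply/eqP => E0; [move: dx | move: dq]; rewrite E0.
have inCT : in_CT (op x e x c q w l) k.
  split; last by rewrite (nseg_op x H).
  split; last by move=> z; rewrite (deg_op x H).
  split.
  - exact: op_sym H.
  - exact: op_irr H.
  - exact: conn_op H C Dl lx lq.
  - by rewrite (edges_op x H).
have := Max _ inCT.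
have := M2_op x H.
have h1 := D2 _ (H_c1 x H); have h2 := D2 _ (H_cm x H).
rewrite h1 h2 Dl.
move: (deg e x) (deg e q) (deg e w) dx dq dw => a b cw ha hb hc.
nia.
Qed.
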